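(* With $G$, $d$, $G_0$, $X$ and the topology $\tau$ as in the context, the space $(X,\tau)$ is Hausdorff.
   Context: Let $G$ be a Polish group, $d$ a compatible right-invariant metric on $G$ (i.e. $d(g_0h,g_1h)=d(g_0,g_1)$) bounded by $1$, and $G_0$ a countable dense subgroup of $G$. Let $\mathcal L(G,d)$ be the set of functions $f:G\to[0,1]$ with $|f(g_1)-f(g_2)|\le d(g_1,g_2)$ for all $g_1,g_2$. Let $\mathbb Q^{<\mathbb N}$ be the set of finite sequences of rationals; for $s\in\mathbb Q^{<\mathbb N}$ and rationals $a_1,\dots,a_k$, $sa_1\dots a_k$ denotes the sequence $s$ followed by $a_1,\dots,a_k$ (natural numbers are regarded as rationals). Elements of $\mathcal L(G,d)^{\mathbb Q^{<\mathbb N}}$ are families $\vec f=(f_s)_{s\in\mathbb Q^{<\mathbb N}}$, and $G$ acts by $(g\cdot\vec f)_s(g_0)=f_s(g_0g)$. Let $X$ be the set of $\vec f\in\mathcal L(G,d)^{\mathbb Q^{<\mathbb N}}$ such that, writing $t=sq_0q_1q_2\,0\,m\,n$ and $u=sq_0q_1q_2\,1\,m\,n$: (1) for all $s\in\mathbb Q^{<\mathbb N}$, $g_0\in G_0$, $m,n\in\mathbb N$, $q_0,q_1,q_2,\epsilon\in\mathbb Q\cap(0,1)$ with $0<q_i\pm\epsilon<1$ ($i=0,1,2$): $f_t(g_0)<q_1-\epsilon$ or $f_s(g_0)\le q_0+\epsilon$; (2) for the same range of parameters: $f_u(g_0)\ge q_2+\epsilon$ or $f_t(g_0)\ge q_1-\epsilon$;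 (3) for all $s\in\mathbb Q^{<\mathbb N}$, $g_0\in G_0$, $q_0,\epsilon\in\mathbb Q\cap(0,1)$: if $f_s(g_0)<q_0$ then there are $q_1,q_2\in\mathbb Q$, $g_1\in G_0$, $m,n\in\mathbb N$ with $0<q_2<q_1<q_0<1$, $d(g_0,g_1)<\epsilon$, and $f_u(g_1)<q_2$ where $u=sq_0q_1q_2\,1\,m\,n$. The topology $\tau$ on $X$ is the one generated by the subbasis of all sets $\{\vec f\in X: f_s(g_0)<q_0\}$ for $s\in\mathbb Q^{<\mathbb N}$, $g_0\in G_0$, $q_0\in\mathbb Q$. *)

(* Defs.v *)
From Stdlib Require Export Reals QArith Qcanon Qreals List.
Open Scope R_scope.

(** Rationals are the canonical rationals [Qc] (so that Q^{<N} has no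
    duplicate indices); they are viewed as reals through [Q2R]. *)
Definition QR (q : Qc) : R := Q2R (this q).
Definition nat2Qc (n : nat) : Qc := Q2Qc (inject_Z (Z.of_nat n)).

Definition is_metric {G : Type} (d : G -> G -> R) : Prop :=
  (forall x y, 0 <= d x y) /\
  (forall x y, d x y = 0 <-> x = y) /\
  (forall x y, d x y = d y x) /\
  (forall x y z, d x z <= d x y + d y z).

Definition metric_open {G : Type} (d : G -> G -> R) (U : G -> Prop) : Prop :=
  forall x, U x -> exists r, 0 < r /\ forall y, d x y < r -> U y.

Definition metric_complete {G : Type} (d : G -> G -> R) : Prop :=
  forall u : nat -> G,
    (forall eps, 0 < eps -> exists N, forall m n, (N <= m)%nat -> (N <= n)%nat ->
        d (u m) (u n) < eps) ->
    exists l, forall eps, 0 < eps -> exists N, forall n, (N <= n)%nat -> d (u n) l < eps.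

Definition is_group {G : Type} (mul : G -> G -> G) (inv : G -> G) (e : G) : Prop :=
  (forall x y z, mul x (mul y z) = mul (mul x y) z) /\
  (forall x, mul e x = x) /\ (forall x, mul x e = x) /\
  (forall x, mul (inv x) x = e) /\ (forall x, mul x (inv x) = e).

Definition polish_group_with_compatible_metric {G : Type}
    (mul : G -> G -> G) (inv : G -> G) (e : G) (d : G -> G -> R) : Prop :=
  is_group mul inv e /\ is_metric d /\
  (forall x y eps, 0 < eps -> exists delta, 0 < delta /\
     forall x' y', d x x' < delta -> d y y' < delta -> d (mul x y) (mul x' y') < eps) /\
  (forall x eps, 0 < eps -> exists delta, 0 < delta /\
     forall x', d x x' < delta -> d (inv x) (inv x') < eps) /\
  (exists c : nat -> G, forall x eps, 0 < eps -> exists n, d x (c n) < eps) /\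
  (exists d' : G -> G -> R, is_metric d' /\ metric_complete d' /\
     forall U : G -> Prop, metric_open d U <-> metric_open d' U).

Definition right_invariant {G : Type} (mul : G -> G -> G) (d : G -> G -> R) : Prop :=
  forall g0 g1 h, d (mul g0 h) (mul g1 h) = d g0 g1.

Definition bounded_by_1 {G : Type} (d : G -> G -> R) : Prop :=
  forall x y, d x y <= 1.

Definition countable_dense_subgroup {G : Type} (mul : G -> G -> G) (inv : G -> G)
    (e : G) (d : G -> G -> R) (G0 : G -> Prop) : Prop :=
  G0 e /\ (forall x y, G0 x -> G0 y -> G0 (mul x y)) /\ (forall x, G0 x -> G0 (inv x)) /\
  (exists enum : nat -> G, forall x, G0 x <-> exists n, enum n = x) /\
  (forall x eps, 0 < eps -> exists g, G0 g /\ d x g < eps).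

Definition in_L {G : Type} (d : G -> G -> R) (f : G -> R) : Prop :=
  (forall g, 0 <= f g <= 1) /\ (forall g1 g2, Rabs (f g1 - f g2) <= d g1 g2).

Definition family (G : Type) := list Qc -> G -> R.

(** the action (g . f)_s (g0) = f_s (g0 g) (not needed for the statement) *)
Definition act {G : Type} (mul : G -> G -> G) (g : G) (F : family G) : family G :=
  fun s g0 => F s (mul g0 g).

Definition in01 (q : Qc) : Prop := 0 < QR q < 1.

Definition idx_t (s : list Qc) (q0 q1 q2 : Qc) (m n : nat) : list Qc :=
  s ++ (q0 :: q1 :: q2 :: nat2Qc 0 :: nat2Qc m :: nat2Qc n :: nil).
Definition idx_u (s : list Qc) (q0 q1 q2 : Qc) (m n : nat) : list Qc :=
  s ++ (q0 :: q1 :: q2 :: nat2Qc 1 :: nat2Qc m :: nat2Qc n :: nil).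

Definition in_X {G : Type} (d : G -> G -> R) (G0 : G -> Prop) (F : family G) : Prop :=
  (forall s, in_L d (F s)) /\
  (* (1) *)
  (forall s g0 m n q0 q1 q2 eps, G0 g0 ->
     in01 q0 -> in01 q1 -> in01 q2 -> in01 eps ->
     0 < QR q0 - QR eps -> QR q0 + QR eps < 1 ->
     0 < QR q1 - QR eps -> QR q1 + QR eps < 1 ->
     0 < QR q2 - QR eps -> QR q2 + QR eps < 1 ->
     F (idx_t s q0 q1 q2 m n) g0 < QR q1 - QR eps \/ F s g0 <= QR q0 + QR eps) /\
  (* (2) *)
  (forall s g0 m n q0 q1 q2 eps, G0 g0 ->
     in01 q0 -> in01 q1 -> in01 q2 -> in01 eps ->
     0 < QR q0 - QR eps -> QR q0 + QR eps < 1 ->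
     0 < QR q1 - QR eps -> QR q1 + QR eps < 1 ->
     0 < QR q2 - QR eps -> QR q2 + QR eps < 1 ->
     F (idx_u s q0 q1 q2 m n) g0 >= QR q2 + QR eps \/
     F (idx_t s q0 q1 q2 m n) g0 >= QR q1 - QR eps) /\
  (* (3) *)
  (forall s g0 q0 eps, G0 g0 -> in01 q0 -> in01 eps ->
     F s g0 < QR q0 ->
     exists (q1 q2 : Qc) (g1 : G) (m n : nat),
       0 < QR q2 /\ QR q2 < QR q1 /\ QR q1 < QR q0 /\ QR q0 < 1 /\
       G0 g1 /\ d g0 g1 < QR eps /\ F (idx_u s q0 q1 q2 m n) g1 < QR q2).

Definition subbasic {G : Type} (d : G -> G -> R) (G0 : G -> Prop)
    (U : family G -> Prop) : Prop :=
  exists s g0 q0, G0 g0 /\ forall F, U F <-> (in_X d G0 F /\ F s g0 < QR q0).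

Inductive gen_open {T : Type} (Xs : T -> Prop) (B : (T -> Prop) -> Prop) :
    (T -> Prop) -> Prop :=
  | go_basic U : B U -> gen_open Xs B U
  | go_whole : gen_open Xs B Xs
  | go_inter U V : gen_open Xs B U -> gen_open Xs B V ->
      gen_open Xs B (fun x => U x /\ V x)
  | go_union (C : (T -> Prop) -> Prop) : (forall U, C U -> gen_open Xs B U) ->
      gen_open Xs B (fun x => exists U, C U /\ U x).

Definition tau_open {G : Type} (d : G -> G -> R) (G0 : G -> Prop) :
    (family G -> Prop) -> Prop :=
  gen_open (in_X d G0) (subbasic d G0).

Definition hausdorff_on {T : Type} (Xs : T -> Prop) (op : (T -> Prop) -> Prop) : Prop :=
  forall x y, Xs x -> Xs y -> x <> y ->
    exists U V, op U /\ op V /\ U x /\ V y /\ (forall z, ~ (U z /\ V z)).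

(* Main.v *)
Require Import Defs.
From Stdlib Require Import Lra Lia.

Lemma Q_dense_R (a b : R) : a < b -> exists q : Q, a < Q2R q < b.
Proof.
  intros Hab.
  destruct (archimed (/ (b - a))) as [H1 H2].
  set (n := up (/ (b - a))) in *.
  assert (Hba : 0 < / (b - a)) by (apply Rinv_0_lt_compat; lra).
  assert (Hn : (0 < n)%Z) by (apply lt_IZR; simpl; lra).
  destruct (archimed (a * IZR n)) as [K1 K2].
  set (k := up (a * IZR n)) in *.
  exists (Qmake k (Z.to_pos n)).
  unfold Q2R; simpl. rewrite Z2Pos.id by lia.
  assert (HnR : 0 < IZR n) by (apply IZR_lt; lia).
  split.
  - apply (Rmult_lt_reg_r (IZR n)); auto.
    rewrite Rmult_assoc, Rinv_l by lra. lra.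
  - apply (Rmult_lt_reg_r (IZR n)); auto.
    rewrite Rmult_assoc, Rinv_l by lra.
    assert (/ (b - a) * (b - a) = 1) by (field; lra).
    assert ((b - a) * IZR n > 1).
    { rewrite <- H. rewrite (Rmult_comm (b-a)). apply Rmult_lt_compat_r; lra. }
    lra.
Qed.

Lemma QR_Q2Qc (q : Q) : QR (Q2Qc q) = Q2R q.
Proof. unfold QR; simpl. apply Qeq_eqR, Qred_correct. Qed.

Lemma Qc_dense (a b : R) : a < b -> exists q : Qc, a < QR q < b.
Proof. intros H; destruct (Q_dense_R a b H) as [q Hq]; exists (Q2Qc q); now rewrite QR_Q2Qc. Qed.

Lemma QR_minus (x y : Qc) : QR (Q2Qc (this x - this y)) = QR x - QR y.
Proof. rewrite QR_Q2Qc. apply Q2R_minus. Qed.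

Lemma sep {G : Type} (d : G -> G -> R) (G0 : G -> Prop) (F F' : family G) s g0 :
  in_X d G0 F -> in_X d G0 F' -> G0 g0 -> F s g0 < F' s g0 ->
  exists U V, tau_open d G0 U /\ tau_open d G0 V /\ U F /\ V F' /\ (forall z, ~ (U z /\ V z)).
Proof.
  intros HF HF' Hg0 Hlt.
  pose proof HF as (HL & H1 & H2 & H3).
  pose proof HF' as (HL' & H1' & H2' & H3').
  destruct (HL s) as [Hr _]. destruct (HL' s) as [Hr' Hlip'].
  specialize (Hr g0); specialize (Hr' g0).
  set (a := F s g0) in *. set (b := F' s g0) in *.
  destruct (Qc_dense a b Hlt) as [q0 Hq0].
  destruct (Qc_dense 0 (Rmin 1 ((b - QR q0)/2))) as [eps Heps].
  { apply Rmin_glb_lt; lra. }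
  pose proof (Rmin_l 1 ((b - QR q0)/2)). pose proof (Rmin_r 1 ((b - QR q0)/2)).
  assert (Hin0 : in01 q0) by (unfold in01; lra).
  assert (Hine : in01 eps) by (unfold in01; lra).
  destruct (H3 s g0 q0 eps Hg0 Hin0 Hine ltac:(unfold a in Hq0; lra))
    as (q1 & q2 & g1 & m & n & Hq2 & Hq21 & Hq10 & Hq01 & Hg1 & Hd & Hu).
  destruct (Qc_dense 0 (Rmin (QR q2) (Rmin (1 - QR q0) ((b - QR q0)/2)))) as [e' He'].
  { apply Rmin_glb_lt; [lra|apply Rmin_glb_lt; lra]. }
  pose proof (Rmin_l (QR q2) (Rmin (1 - QR q0) ((b - QR q0)/2))).
  pose proof (Rmin_r (QR q2) (Rmin (1 - QR q0) ((b - QR q0)/2))).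
  pose proof (Rmin_l (1 - QR q0) ((b - QR q0)/2)).
  pose proof (Rmin_r (1 - QR q0) ((b - QR q0)/2)).
  assert (Hlb : F' s g1 > QR q0 + QR e').
  { specialize (Hlip' g0 g1). unfold b in *. pose proof (Rle_abs (F' s g0 - F' s g1)). lra. }
  assert (Hi1 : in01 q1) by (unfold in01; lra).
  assert (Hi2 : in01 q2) by (unfold in01; lra).
  assert (Hie : in01 e') by (unfold in01; lra).
  set (r := Q2Qc (this q1 - this e')).
  assert (Hr_ : QR r = QR q1 - QR e') by apply QR_minus.
  exists (fun H => in_X d G0 H /\ H (idx_u s q0 q1 q2 m n) g1 < QR q2).
  exists (fun H => in_X d G0 H /\ H (idx_t s q0 q1 q2 m n) g1 < QR r).
  split; [|split; [|split; [|split]]].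
  - apply go_basic. exists (idx_u s q0 q1 q2 m n), g1, q2. split; auto. tauto.
  - apply go_basic. exists (idx_t s q0 q1 q2 m n), g1, r. split; auto. tauto.
  - split; auto.
  - split; auto. rewrite Hr_.
    destruct (H1' s g1 m n q0 q1 q2 e' Hg1 Hin0 Hi1 Hi2 Hie) as [Ht|Ht];
      try lra.
  - intros z [[Hz Hzu] [_ Hzt]]. rewrite Hr_ in Hzt.
    destruct Hz as (_ & _ & Z2 & _).
    destruct (Z2 s g1 m n q0 q1 q2 e' Hg1 Hin0 Hi1 Hi2 Hie) as [Hh|Hh]; lra.
Qed.

From Stdlib Require Import Classical FunctionalExtensionality.

Theorem lemma2p4 (G : Type) (mul : G -> G -> G) (inv : G -> G) (e : G)
  (d : G -> G -> R) (G0 : G -> Prop) :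
  polish_group_with_compatible_metric mul inv e d ->
  right_invariant mul d ->
  bounded_by_1 d ->
  countable_dense_subgroup mul inv e d G0 ->
  hausdorff_on (in_X d G0) (tau_open d G0).
Proof.
  intros _ _ _ (_ & _ & _ & _ & Hdense) F F' HF HF' Hne.
  destruct (classic (exists s g, F s g <> F' s g)) as [[s [g Hsg]]|Hno].
  2:{ exfalso; apply Hne. apply functional_extensionality; intro s.
      apply functional_extensionality; intro g.
      apply NNPP; intro; apply Hno; eauto. }
  set (delta := Rabs (F s g - F' s g)).
  assert (Hdel : 0 < delta) by (apply Rabs_pos_lt; intro; apply Hsg; lra).
  destruct (Hdense g (delta/2) ltac:(lra)) as [g0 [Hg0 Hd]].
  destruct (proj1 HF s) as [_ Hl]. destruct (proj1 HF' s) as [_ Hl'].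
  specialize (Hl g g0); specialize (Hl' g g0).
  assert (Hneq : F s g0 <> F' s g0).
  { intro E. unfold delta in Hdel.
    assert (Rabs (F s g - F' s g) <= Rabs (F s g - F s g0) + Rabs (F' s g - F' s g0)).
    { replace (F s g - F' s g) with ((F s g - F s g0) - (F' s g - F' s g0)) by (rewrite E; ring).
      eapply Rle_trans; [apply Rabs_triang|]. rewrite Rabs_Ropp. lra. }
    unfold delta in *; lra. }
  destruct (Rtotal_order (F s g0) (F' s g0)) as [Hl0|[E|Hg]].
  - exact (sep d G0 F F' s g0 HF HF' Hg0 Hl0).
  - contradiction.
  - destruct (sep d G0 F' F s g0 HF' HF Hg0 Hg) as (U & V & HU & HV & HUx & HVx & Hdis).
    exists V, U. repeat split; auto. intros z [A B]; apply (Hdis z); auto.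
Qed.
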